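(* Let $A,B\in\mathbb{Z}$ with $4A^3+27B^2\ne0$, let $M$ be a positive integer with $\max\{10\sqrt{|A|},5\sqrt[3]{|B|}\}\le M$, let $D$ be a squarefree positive integer and $E_D: y^2=x^3+D^2Ax+D^3B$. Let $P,Q$ be points of $E_D$ with integer coordinates satisfying $MD\le x(P)<x(Q)$. Then \[h(P+Q)\le h(P)+2h(Q)+2.9.\]
   Context: $h$ is the absolute logarithmic Weil height on $\overline{\mathbb{Q}}$, and for a point $P$ on $E_D$, $h(P)=h(x(P))$. *)

(* Defs.v *)
From HB Require Import structures.
From mathcomp Require Import all_boot all_order all_algebra.
From mathcomp Require Import all_classical all_reals all_analysis.
Set Implicit Arguments. Unset Strict Implicit. Unset Printing Implicit Defensive.
Import Order.TTheory GRing.Theory Num.Theory.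
Local Open Scope ring_scope.

Definition squarefree (n : nat) : Prop :=
  forall p : nat, prime p -> ~~ (p * p %| n)%N.

(* Points of a short Weierstrass curve y^2 = x^3 + a x + b over Q:
   None is the point at infinity O, Some (x, y) an affine point. *)
Definition ecpt := option (rat * rat).

Definition ec_add (a b : rat) (P Q : ecpt) : ecpt :=
  match P, Q with
  | None, _ => Q
  | _, None => P
  | Some (x1, y1), Some (x2, y2) =>
      if x1 == x2 then
        if y1 == - y2 then None
        else let l := (3 * x1 ^+ 2 + a) / (2 * y1) in
             let x3 := l ^+ 2 - x1 - x2 in
             Some (x3, l * (x1 - x3) - y1)
      else let l := (y2 - y1) / (x2 - x1) in
           let x3 := l ^+ 2 - x1 - x2 in
           Some (x3, l * (x1 - x3) - y1)
  end.

Definition heightQ (R : realType) (q : rat) : R :=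
  ln ((Num.max `|numq q| (denq q))%:~R).

Definition ptheight (R : realType) (P : ecpt) : R :=
  match P with None => 0 | Some (x, _) => heightQ R x end.

(* Main.v *)
Require Import Defs.
From HB Require Import structures.
From mathcomp Require Import all_boot all_order all_algebra.
From mathcomp Require Import all_classical all_reals all_analysis.
From mathcomp Require Import ring lra.
Import Order.TTheory GRing.Theory Num.Theory.
Local Open Scope ring_scope.
Lemma heightQ_frac (R : realType) (n d : int) : d != 0 ->
  heightQ R (n%:~R / d%:~R) <= ln ((Num.max `|n| `|d|)%:~R : R).
Proof.
move=> d0; rewrite /heightQ.
have -> : (n%:~R / d%:~R : rat) = fracq (n, d) by rewrite fracqE.
have dp := denq_gt0 (fracq (n, d)).
rewrite ler_ln ?posrE ?ltr0z; last 2 first.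
- by rewrite lt_max dp orbT.
- by rewrite lt_max !normr_gt0 d0 orbT.
rewrite ler_int.
have Hn : `|numq (fracq (n, d))| <= `|n|.
  rewrite num_fracq /= d0 normrM normr_sign mul1r.
  rewrite -[X in _ <= X]abszE lez_nat. exact: leq_div.
have Hd : denq (fracq (n, d)) <= `|d|.
  rewrite den_fracq /= d0 -[X in _ <= X]abszE lez_nat. exact: leq_div.
rewrite ge_max !le_max Hn Hd orbT /=.
done.
Qed.
Lemma core (R : realType) (X1 X2 Y1 Y2 a b : R) : 1 <= X1 -> X1 < X2 ->
  100 * `|a| <= X1 ^+ 2 -> 125 * `|b| <= X1 ^+ 3 ->
  Y1 ^+ 2 = X1 ^+ 3 + a * X1 + b -> Y2 ^+ 2 = X2 ^+ 3 + a * X2 + b ->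
  `|(Y2 - Y1) ^+ 2 - (X1 + X2) * (X2 - X1) ^+ 2| <= 5 * (X1 * X2 ^+ 2).
Proof.
move=> h1 h12 ha hb e1 e2.
have [ha1 ha2] : - X1 ^+ 2 <= 100 * a /\ 100 * a <= X1 ^+ 2.
  by move: ha; case: (ler0P a) => ?; rewrite ?normrE; split; nra.
have [hb1 hb2] : - X1 ^+ 3 <= 125 * b /\ 125 * b <= X1 ^+ 3.
  move: hb; case: (ler0P b) => ? h; split; nra.
have X2p : 1 < X2 by lra.
have K0 : 0 <= X1 * X2 ^+ 2 by nra.
have K1 : X1 ^+ 2 * X2 <= X1 * X2 ^+ 2 by nra.
have K2 : X1 ^+ 3 <= X1 * X2 ^+ 2 by nra.
have E : (Y2 - Y1) ^+ 2 - (X1 + X2) * (X2 - X1) ^+ 2 =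
   X1 ^+ 2 * X2 + X1 * X2 ^+ 2 + a * (X1 + X2) + 2 * b - 2 * (Y1 * Y2).
  have -> : (Y2 - Y1) ^+ 2 = Y2 ^+ 2 + Y1 ^+ 2 - 2 * (Y1 * Y2) by ring.
  rewrite e1 e2; ring.
have T1 : 100 * `|a * (X1 + X2)| <= 2 * (X1 * X2 ^+ 2).
  rewrite normrM (ger0_norm (x := X1 + X2)); last lra.
  have : 100 * `|a| * (X1 + X2) <= X1 ^+ 2 * (X1 + X2) by apply: ler_wpM2r => //; lra.
  nra.
have y1b : 100 * Y1 ^+ 2 <= 102 * X1 ^+ 3 by rewrite e1; nra.
have y2b : 100 * Y2 ^+ 2 <= 102 * X2 ^+ 3.
  have : X1 ^+ 3 <= X2 ^+ 3 by rewrite lerXn2r ?nnegrE //; lra.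
  rewrite e2; nra.
have X3 : X1 ^+ 3 * X2 ^+ 3 <= X1 ^+ 2 * X2 ^+ 4.
  have : X1 ^+ 3 * X2 ^+ 3 = (X1 ^+ 2 * X2 ^+ 3) * X1 by ring.
  have : X1 ^+ 2 * X2 ^+ 4 = (X1 ^+ 2 * X2 ^+ 3) * X2 by ring.
  have : 0 <= X1 ^+ 2 * X2 ^+ 3 by nra.
  nra.
have YY : (100 * (Y1 * Y2)) ^+ 2 <= (102 * (X1 * X2 ^+ 2)) ^+ 2.
  have -> : (100 * (Y1 * Y2)) ^+ 2 = (100 * Y1 ^+ 2) * (100 * Y2 ^+ 2) by ring.
  have : 0 <= 100 * Y1 ^+ 2 by nra.
  have : (102 * X1 ^+ 3) * (102 * X2 ^+ 3) <= (102 * (X1 * X2 ^+ 2)) ^+ 2 by nra.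
  have : (100 * Y1 ^+ 2) * (100 * Y2 ^+ 2) <= (102 * X1 ^+ 3) * (100 * Y2 ^+ 2).
    by apply: ler_wpM2r => //; nra.
  have : (102 * X1 ^+ 3) * (100 * Y2 ^+ 2) <= (102 * X1 ^+ 3) * (102 * X2 ^+ 3).
    by apply: ler_wpM2l => //; nra.
  lra.
have YY' : `|100 * (Y1 * Y2)| <= 102 * (X1 * X2 ^+ 2).
  rewrite -(ger0_norm (x := 102 * _)); last nra.
  by rewrite -ler_sqr ?nnegrE // ?normr_ge0 // !real_normK ?num_real.
have [T1a T1b] : - (2 * (X1 * X2 ^+ 2)) <= 100 * (a * (X1 + X2)) /\ 100 * (a * (X1 + X2)) <= 2 * (X1 * X2 ^+ 2).
  have := ler_norm (a * (X1 + X2)); have := ler_norm (- (a * (X1 + X2))); rewrite normrN.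
  split; nra.
have [Ya Yb] : - (102 * (X1 * X2 ^+ 2)) <= 100 * (Y1 * Y2) /\ 100 * (Y1 * Y2) <= 102 * (X1 * X2 ^+ 2).
  have := ler_norm (100 * (Y1 * Y2)); have := ler_norm (- (100 * (Y1 * Y2))); rewrite normrN.
  split; nra.
rewrite E ler_norml; apply/andP; split; nra.
Qed.

Lemma heightQ_int (R : realType) (x : int) : 1 <= x -> heightQ R x%:~R = ln (x%:~R : R).
Proof.
move=> hx; rewrite /heightQ numq_int denq_int.
by rewrite (gtr0_norm (lt_le_trans ltr01 hx)) (max_l hx).
Qed.

Theorem lemma3p9 (R : realType) (A B : int) (M D : nat) (x1 y1 x2 y2 : int) :
  4 * A ^+ 3 + 27 * B ^+ 2 != 0 ->
  (0 < M)%N ->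
  Num.max (10 * Num.sqrt (`|A|%:~R : R)) (5 * powR (`|B|%:~R : R) (3^-1))
    <= (M%:R : R) ->
  (0 < D)%N -> squarefree D ->
  y1 ^+ 2 = x1 ^+ 3 + (D%:Z) ^+ 2 * A * x1 + (D%:Z) ^+ 3 * B ->
  y2 ^+ 2 = x2 ^+ 3 + (D%:Z) ^+ 2 * A * x2 + (D%:Z) ^+ 3 * B ->
  ((M * D)%:Z <= x1) -> x1 < x2 ->
  let a : rat := ((D%:Z) ^+ 2 * A)%:~R in
  let b : rat := ((D%:Z) ^+ 3 * B)%:~R in
  let P : ecpt := Some (x1%:~R, y1%:~R) in
  let Q : ecpt := Some (x2%:~R, y2%:~R) in
  ptheight R (ec_add a b P Q) <= ptheight R P + 2 * ptheight R Q + 29 / 10.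
Proof.
move=> _ hM hmax hD _ e1 e2 hx1 h12; cbv zeta.
have x1ge1 : 1 <= x1.
  apply: le_trans hx1; rewrite lez_nat; by rewrite muln_gt0 hM hD.
have x2ge1 : 1 <= x2 by apply: le_trans x1ge1 (ltW h12).
rewrite /ec_add eqr_int (lt_eqF h12) /=.
rewrite !heightQ_int //.
set N : int := (y2 - y1) ^+ 2 - (x1 + x2) * (x2 - x1) ^+ 2.
set d2 : int := (x2 - x1) ^+ 2.
have d20 : d2 != 0 by rewrite /d2 expf_neq0 // subr_eq0 gt_eqF.
have -> : (((y2%:~R - y1%:~R) / (x2%:~R - x1%:~R)) ^+ 2 - x1%:~R - x2%:~R : rat)
    = N%:~R / d2%:~R.
  have dq : (x2%:~R - x1%:~R : rat) != 0 by rewrite -rmorphB /= intr_eq0 subr_eq0 gt_eqF.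
  rewrite /N /d2 !(rmorphB, rmorphM, rmorphXn, rmorphD) /=.
  by field.
refine (le_trans (@heightQ_frac R N d2 d20) _).
have hmA : 10 * Num.sqrt (`|A|%:~R : R) <= M%:R by move: hmax; rewrite ge_max => /andP[].
have hmB : 5 * powR (`|B|%:~R : R) (3^-1) <= M%:R by move: hmax; rewrite ge_max => /andP[].
have hA : 100 * (`|A|%:~R : R) <= M%:R ^+ 2.
  have s0 := sqrtr_ge0 (`|A|%:~R : R).
  have s2 : Num.sqrt (`|A|%:~R : R) ^+ 2 = `|A|%:~R by rewrite sqr_sqrtr // ler0z normr_ge0.
  rewrite -s2; nra.
have hB : 125 * (`|B|%:~R : R) <= M%:R ^+ 3.
  set t := powR (`|B|%:~R : R) (3^-1).
  have t0 : 0 <= t := powR_ge0 _ _.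
  have t3 : t ^+ 3 = `|B|%:~R.
    rewrite /t -powR_mulrn ?powR_ge0 // -powRrM mulVf ?pnatr_eq0 // powRr1 //.
  rewrite -t3.
  have M0 : 0 <= (M%:R : R) by apply: ler0n.
  have Mt : 0 <= (M%:R : R) * t by apply: mulr_ge0.
  have hmB2 : 5 * t <= M%:R by exact: hmB.
  have u0 : 0 <= M%:R - 5 * t by lra.
  have v0 : 0 <= (M%:R : R) ^+ 2 + 5 * M%:R * t + 25 * t ^+ 2.
    by rewrite !addr_ge0 ?sqr_ge0 // ?mulr_ge0 ?sqr_ge0.
  have := mulr_ge0 u0 v0.
  have -> : (M%:R - 5 * t) * ((M%:R : R) ^+ 2 + 5 * M%:R * t + 25 * t ^+ 2) = M%:R ^+ 3 - 125 * t ^+ 3 by ring.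
  lra.
set X1 : R := x1%:~R; set X2 : R := x2%:~R.
set Dr : R := ((D : int)%:~R).
set Mr : R := M%:R.
have Dr0 : 0 <= Dr by rewrite /Dr ler0z.
have M0 : 0 <= Mr by rewrite /Mr ler0n.
have hMD : Mr * Dr <= X1.
  have := hx1; rewrite -(ler_int R) PoszM rmorphM /=; exact.
have X1ge1 : 1 <= X1 by rewrite /X1 -(ler_int R) in x1ge1.
have X12 : X1 < X2 by rewrite /X1 /X2 ltr_int.
have ha : 100 * `|Dr ^+ 2 * A%:~R| <= X1 ^+ 2.
  rewrite normrM normrX (ger0_norm Dr0) -intr_norm.
  have h1 : Dr ^+ 2 * (100 * `|A|%:~R) <= Dr ^+ 2 * Mr ^+ 2 by apply: ler_wpM2l; rewrite ?sqr_ge0.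
  have h2 : 0 <= Mr * Dr by apply: mulr_ge0.
  have h3 : (Mr * Dr) ^+ 2 <= X1 ^+ 2 by rewrite lerXn2r ?nnegrE //; lra.
  have -> : 100 * (Dr ^+ 2 * `|A|%:~R) = Dr ^+ 2 * (100 * `|A|%:~R) by ring.
  apply: le_trans h1 _; apply: le_trans h3; rewrite exprMn mulrC. done.
have hb : 125 * `|Dr ^+ 3 * B%:~R| <= X1 ^+ 3.
  rewrite normrM normrX (ger0_norm Dr0) -intr_norm.
  have h1 : Dr ^+ 3 * (125 * `|B|%:~R) <= Dr ^+ 3 * Mr ^+ 3 by apply: ler_wpM2l; rewrite ?exprn_ge0.
  have h2 : 0 <= Mr * Dr by apply: mulr_ge0.
  have h3 : (Mr * Dr) ^+ 3 <= X1 ^+ 3 by rewrite lerXn2r ?nnegrE //; lra.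
  have -> : 125 * (Dr ^+ 3 * `|B|%:~R) = Dr ^+ 3 * (125 * `|B|%:~R) by ring.
  apply: le_trans h1 _; apply: le_trans h3; rewrite exprMn mulrC. done.
have E1 : (y1%:~R : R) ^+ 2 = X1 ^+ 3 + (Dr ^+ 2 * A%:~R) * X1 + Dr ^+ 3 * B%:~R.
  by rewrite -rmorphXn e1 /= !(rmorphD, rmorphM, rmorphXn).
have E2 : (y2%:~R : R) ^+ 2 = X2 ^+ 3 + (Dr ^+ 2 * A%:~R) * X2 + Dr ^+ 3 * B%:~R.
  by rewrite -rmorphXn e2 /= !(rmorphD, rmorphM, rmorphXn).
have C := @core R X1 X2 _ _ _ _ X1ge1 X12 ha hb E1 E2.
have X1p : 0 < X1 by lra.
have X2p : 0 < X2 by lra.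
have K0 : 0 < X1 * X2 ^+ 2 by rewrite mulr_gt0 // exprn_gt0.
have NC : (`|N|%:~R : R) <= 5 * (X1 * X2 ^+ 2).
  by rewrite intr_norm /N !(rmorphB, rmorphM, rmorphXn, rmorphD).
have dC : (`|d2|%:~R : R) <= 5 * (X1 * X2 ^+ 2).
  rewrite intr_norm /d2 rmorphXn rmorphB /= ger0_norm ?sqr_ge0 //.
  have : (X2 - X1) ^+ 2 <= X2 ^+ 2 by rewrite lerXn2r ?nnegrE; lra.
  have : X2 ^+ 2 <= X1 * X2 ^+ 2 by rewrite ler_peMl // ?sqr_ge0.
  lra.
have mC : ((Num.max `|N| `|d2|)%:~R : R) <= 5 * (X1 * X2 ^+ 2).
  by rewrite maxEle; case: ifP.
have mpos : 0 < ((Num.max `|N| `|d2|)%:~R : R).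
  by rewrite ltr0z lt_max !normr_gt0 d20 orbT.
have e1' : 49 / 20 <= expR (29 / 20 : R) by have := expR_ge1Dx (29 / 20 : R); lra.
have e2' : expR (29 / 10 : R) = expR (29 / 20) * expR (29 / 20).
  by rewrite -expRD; congr expR; field.
have e3 : 5 <= expR (29 / 10 : R).
  rewrite e2'; have : 0 <= 49 / 20 :> R by lra. nra.
apply: (@le_trans _ _ (ln (expR (29 / 10) * (X1 * X2 ^+ 2)))).
  rewrite ler_ln ?posrE ?mulr_gt0 ?expR_gt0 //.
  apply: le_trans mC _; apply: ler_wpM2r; lra.
rewrite lnM ?posrE ?expR_gt0 // expRK lnM ?posrE ?exprn_gt0 // lnXn // mulr2n.
lra.
Qed.
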